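(* Let $\beta\in(0,\tfrac12)$ and let $\lambda\in(0,1)$ be a principal eigenvalue of $\Delta_\beta$ with a non-negative eigenfunction $u$. Then the function $\bar u(x)=m^{-|x|}\sum_{y\in\mathbb{T}_m:\,|y|=|x|}u(y)$ is a strictly positive eigenfunction associated with $\lambda$ (in particular $\lim_{x\to y}\bar u(x)=0$ for every branch $y$), it is constant on each level, and it is strictly decreasing with respect to the level.
   Context: Tree: for an integer $m\ge2$, $\mathbb{T}_m$ has vertices the root $\emptyset$ and all finite sequences $(\emptyset,a_1,\dots,a_k)$, $a_i\in\{0,\dots,m-1\}$; $|x|$ is the level, successors of $x$ are $(x,i)$, $\hat x$ is the immediate predecessor of $x\ne\emptyset$. A branch is an infinite sequence $(x_n)_{n\ge0}$ with $x_0=\emptyset$, $x_{n+1}$ a successor of $x_n$; $\lim_{x\to y}u(x)=\lim_n u(x_n)$ for a branch $y=(x_n)$. Operator: $p_\beta=\beta/(1-\beta)$ for $\beta\in(0,1)$. $\Delta_\beta u(\emptyset)=\frac1m\sum_{i=0}^{m-1}u(\emptyset,i)-u(\emptyset)$ and, for $x\ne\emptyset$, $\Delta_\beta u(x)=\big(\beta u(\hat x)+\frac{1-\beta}{m}\sum_{i=0}^{m-1}u(x,i)-u(x)\big)p_\beta^{-|x|}$. Eigenvalues: $\lambda\in\mathbb{R}$ is an eigenvalue of $\Delta_\beta$ if there is a bounded $u\not\equiv0$ with $-\Delta_\beta u=\lambda u$ on $\mathbb{T}_m$ and $\lim_{x\to y}u(x)=0$ for every branch $y$ ($u$ is an eigenfunction);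 an eigenvalue $\lambda>0$ is principal if it has a non-negative eigenfunction. *)

(* Defs.v *)
From HB Require Import structures.
From mathcomp Require Import all_boot all_order all_algebra.
From mathcomp Require Import all_classical all_reals all_analysis.
Set Implicit Arguments. Unset Strict Implicit. Unset Printing Implicit Defensive.
Import Order.TTheory GRing.Theory Num.Theory.
Import numFieldNormedType.Exports.
Local Open Scope ring_scope.
Local Open Scope classical_set_scope.

(* The vertex (root, a_1, ..., a_k) is
   represented by the REVERSED list [:: a_k; ...; a_1] : seq 'I_m.
   Hence: root = [::], successor (x,i) = i :: x, predecessor x^ = behead x,
   level |x| = size x. *)
Definition vertex (m : nat) := seq 'I_m.

Definition pbeta (R : realType) (beta : R) : R := beta / (1 - beta).

Definition Delta (R : realType) (m : nat) (beta : R) (u : vertex m -> R)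
  (x : vertex m) : R :=
  match x with
  | [::] => (m%:R)^-1 * (\sum_(i < m) u [:: i]) - u [::]
  | _ :: _ =>
      (beta * u (behead x) + (1 - beta) / m%:R * (\sum_(i < m) u (i :: x)) - u x)
        * (pbeta beta) ^- (size x)
  end.

Definition is_branch (m : nat) (b : nat -> vertex m) : Prop :=
  b 0%N = [::] /\ forall n, exists i : 'I_m, b n.+1 = i :: b n.

Definition bounded_fun (R : realType) (m : nat) (u : vertex m -> R) : Prop :=
  exists M : R, forall x, `|u x| <= M.

Definition is_eigenfunction (R : realType) (m : nat) (beta lambda : R)
  (u : vertex m -> R) : Prop :=
  [/\ bounded_fun u,
      exists x, u x != 0,
      forall x, - Delta beta u x = lambda * u x
    & forall b, is_branch b -> u (b n) @[n --> \oo] --> (0 : R)].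

Definition is_eigenvalue (R : realType) (m : nat) (beta lambda : R) : Prop :=
  exists u : vertex m -> R, is_eigenfunction beta lambda u.

Definition is_principal_eigenvalue (R : realType) (m : nat) (beta lambda : R)
  : Prop :=
  0 < lambda /\
  exists u : vertex m -> R, is_eigenfunction beta lambda u /\ forall x, 0 <= u x.

Definition level_avg (R : realType) (m : nat) (u : vertex m -> R)
  (x : vertex m) : R :=
  (m%:R) ^- (size x) * \sum_(t : (size x).-tuple 'I_m) u (tval t).

(* Main.v *)
Require Import Defs.
From HB Require Import structures.
From mathcomp Require Import all_boot all_order all_algebra.
From mathcomp Require Import all_classical all_reals all_analysis.
From mathcomp Require Import ring lra zify.
Import Order.TTheory GRing.Theory Num.Theory.
Import numFieldNormedType.Exports.
Local Open Scope ring_scope.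
Local Open Scope classical_set_scope.

Lemma eq_nonroot {R : realType} {m : nat} {beta lambda : R} {u : vertex m -> R} :
  0 < beta -> beta < 1 ->
  (forall x, - Delta beta u x = lambda * u x) ->
  forall y : vertex m, (0 < size y)%N ->
  (1 - beta) / m%:R * \sum_(i < m) u (i :: y) =
  (1 - lambda * pbeta beta ^+ size y) * u y - beta * u (behead y).
Proof.
move=> hb0 hb1 heq y; case: y => [|j z] hs //.
have := heq (j :: z); rewrite /Delta.
set E := (beta * _ + _ - _).
set P := pbeta beta ^+ size (j :: z).
have hP : P != 0.
  by rewrite expf_neq0 // /pbeta mulf_neq0 // ?invr_eq0 gt_eqF // subr_gt0.
move=> H.
have HE : E = - (lambda * u (j :: z)) * P.
  by rewrite -H opprK divfK.
move: HE; rewrite /E /=; lra.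
Qed.

Lemma eq_root {R : realType} {m : nat} {beta lambda : R} {u : vertex m -> R} :
  (forall x, - Delta beta u x = lambda * u x) ->
  (m%:R)^-1 * \sum_(i < m) u [:: i] = (1 - lambda) * u [::].
Proof. move=> heq; have := heq [::]; rewrite /Delta; lra. Qed.
Lemma sum_tupleS (R : realType) (m n : nat) (f : seq 'I_m -> R) :
  \sum_(t : n.+1.-tuple 'I_m) f (tval t) =
  \sum_(t : n.-tuple 'I_m) \sum_(i < m) f (i :: tval t).
Proof.
rewrite pair_big /=.
rewrite (reindex (fun p : n.-tuple 'I_m * 'I_m => [tuple of p.2 :: tval p.1])) /=.
  by [].
exists (fun t : n.+1.-tuple 'I_m => (behead_tuple t, thead t)).
  by move=> [t i] _ /=; congr pair; apply: val_inj.
move=> t _ /=; apply: val_inj => /=.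
by case: t => [[|a s] //=].
Qed.

Lemma sum_tuple0 (R : realType) (m : nat) (f : seq 'I_m -> R) :
  \sum_(t : 0.-tuple 'I_m) f (tval t) = f [::].
Proof.
rewrite (eq_bigr (fun _ => f [::])); last by move=> t _; rewrite tuple0.
by rewrite sumr_const card_tuple expn0.
Qed.
Arguments sum_tupleS {R m n} f.
Arguments sum_tuple0 {R m} f.
Definition lavg {R : realType} {m : nat} (u : vertex m -> R) (n : nat) : R :=
  (m%:R) ^- n * \sum_(t : n.-tuple 'I_m) u (tval t).

Lemma sum_behead (R : realType) (m k : nat) (u : vertex m -> R) :
  \sum_(t : k.+1.-tuple 'I_m) u (behead (tval t)) =
  m%:R * \sum_(t : k.-tuple 'I_m) u (tval t).
Proof.
rewrite (sum_tupleS (fun s => u (behead s))) /= mulr_sumr.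
by apply: eq_bigr => t _; rewrite sumr_const card_ord mulr_natl.
Qed.

Lemma lavg_rec {R : realType} {m : nat} {beta lambda : R} {u : vertex m -> R} :
  (0 < m)%N -> 0 < beta -> beta < 1 ->
  (forall x, - Delta beta u x = lambda * u x) ->
  forall k, (1 - beta) * lavg u k.+2 =
    (1 - lambda * pbeta beta ^+ k.+1) * lavg u k.+1 - beta * lavg u k.
Proof.
move=> hm hb0 hb1 heq k.
have H : \sum_(t : k.+1.-tuple 'I_m) ((1 - beta) / m%:R * \sum_(i < m) u (i :: tval t))
  = \sum_(t : k.+1.-tuple 'I_m) ((1 - lambda * pbeta beta ^+ k.+1) * u (tval t)
       - beta * u (behead (tval t))).
  apply: eq_bigr => t _; rewrite (eq_nonroot hb0 hb1 heq) ?size_tuple //.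
move: H; rewrite -mulr_sumr -sum_tupleS sumrB -!mulr_sumr sum_behead.
rewrite /lavg.
have hM : (m%:R : R) != 0 by rewrite pnatr_eq0 -lt0n.
set S2 := \sum_(t : k.+2.-tuple 'I_m) _.
set S1 := \sum_(t : k.+1.-tuple 'I_m) _.
set S0 := \sum_(t : k.-tuple 'I_m) _.
set M := (m%:R : R).
set P := pbeta beta ^+ k.+1.
move=> H.
have HS2 : S2 = M / (1 - beta) * ((1 - lambda * P) * S1 - beta * (M * S0)).
  rewrite -H; field; apply/andP; split=> //; rewrite subr_eq0 gt_eqF //.
rewrite HS2 [M ^+ k.+2]exprS [M ^+ k.+1]exprS.
have hX : M ^+ k != 0 by rewrite expf_neq0.
move: (M ^+ k) hX => X hX.
field; apply/and3P; split=> //; rewrite subr_eq0 gt_eqF //.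
Qed.

Lemma lavg0 {R : realType} {m : nat} (u : vertex m -> R) : lavg u 0 = u [::].
Proof. by rewrite /lavg expr0 invr1 mul1r (sum_tuple0 u). Qed.

Lemma lavg1 {R : realType} {m : nat} (u : vertex m -> R) :
  lavg u 1 = (m%:R)^-1 * \sum_(i < m) u [:: i].
Proof. by rewrite /lavg expr1 (sum_tupleS u) (sum_tuple0 (fun s => \sum_(i < m) u (i :: s))). Qed.

Lemma lavg_root {R : realType} {m : nat} {beta lambda : R} {u : vertex m -> R} :
  (forall x, - Delta beta u x = lambda * u x) ->
  lavg u 1 = (1 - lambda) * lavg u 0.
Proof. by move=> heq; rewrite lavg1 lavg0 (eq_root heq). Qed.

Lemma lavg_le {R : realType} {m : nat} (u : vertex m -> R) n (c : R) :
  (0 < m)%N -> (forall t : n.-tuple 'I_m, u t <= c) -> lavg u n <= c.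
Proof.
case: m u => [//|m] u _ H; rewrite /lavg.
have hM : (0 : R) < (m.+1)%:R ^+ n by rewrite exprn_gt0 // ltr0n.
rewrite ler_pdivrMl //.
apply: le_trans (ler_sum _ (fun t _ => H t)) _.
by rewrite sumr_const card_tuple card_ord -natrX mulr_natl.
Qed.

Lemma lavg_ge {R : realType} {m : nat} (u : vertex m -> R) n (c : R) :
  (0 < m)%N -> (forall t : n.-tuple 'I_m, c <= u t) -> c <= lavg u n.
Proof.
case: m u => [//|m] u _ H; rewrite /lavg.
have hM : (0 : R) < (m.+1)%:R ^+ n by rewrite exprn_gt0 // ltr0n.
rewrite ler_pdivlMl //.
apply: le_trans (ler_sum _ (fun t _ => H t)).
by rewrite sumr_const card_tuple card_ord -natrX mulr_natl.
Qed.

Lemma pbeta_gt0 {R : realType} {beta : R} : 0 < beta -> beta < 1 -> 0 < pbeta beta.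
Proof. by move=> h0 h1; rewrite /pbeta divr_gt0 // subr_gt0. Qed.

Lemma lavg_decr {R : realType} {m : nat} {beta lambda : R} {u : vertex m -> R} :
  (0 < m)%N -> 0 < beta -> beta < 1 -> 0 <= lambda ->
  (forall x, - Delta beta u x = lambda * u x) -> (forall x, 0 <= u x) ->
  forall k, lavg u k.+1 - lavg u k <= - (lambda * pbeta beta ^+ k * lavg u 0).
Proof.
move=> hm hb0 hb1 hl heq hu.
elim=> [|k IH].
  by rewrite (lavg_root heq) expr0 mulr1; lra.
have hr := lavg_rec hm hb0 hb1 heq k.
have hp := pbeta_gt0 hb0 hb1.
have hpd : (1 - beta) * pbeta beta = beta.
  by rewrite /pbeta mulrC divfK // subr_eq0 gt_eqF.
have h1 : 0 <= lavg u k.+1 by apply: lavg_ge => // t.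
have h3 : 0 <= lambda * (pbeta beta ^+ k.+1) * lavg u k.+1.
  apply: mulr_ge0 => //; apply: mulr_ge0 => //; apply: exprn_ge0; exact: ltW.
move: hr IH h3; rewrite exprS.
move: (pbeta beta) (pbeta beta ^+ k) hp hpd => p P hp hpd.
move=> E IH h3.
have hb' : 0 < 1 - beta by rewrite subr_gt0.
rewrite -(ler_pM2l hb').
have H1 : beta * (lavg u k.+1 - lavg u k) <= beta * (- (lambda * P * lavg u 0)).
  by rewrite ler_wpM2l // ltW.
have H2 : (1 - beta) * (- (lambda * (p * P) * lavg u 0)) =
  beta * (- (lambda * P * lavg u 0)) by rewrite -[in RHS]hpd; ring.
rewrite H2; lra.
Qed.

Lemma lavg0_pos {R : realType} {m : nat} {beta lambda : R} {u : vertex m -> R} :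
  (0 < m)%N -> 0 < beta -> beta < 1 -> 0 <= lambda ->
  (forall x, - Delta beta u x = lambda * u x) -> (forall x, 0 <= u x) ->
  (exists x, u x != 0) -> 0 < lavg u 0.
Proof.
move=> hm hb0 hb1 hl heq hu [x hx].
rewrite lt_neqAle lavg0 hu andbT; apply/negP => /eqP h0.
have hk : forall k, lavg u k <= 0.
  elim=> [|k IH]; first by rewrite lavg0 -h0.
  have := lavg_decr hm hb0 hb1 hl heq hu k.
  by rewrite lavg0 -h0 mulr0 oppr0 subr_le0 => /le_trans; apply.
have hz : lavg u (size x) = 0.
  by apply/le_anti; rewrite hk /=; apply: lavg_ge.
move: hz; rewrite /lavg => /eqP; rewrite mulf_eq0 invr_eq0 expf_eq0 pnatr_eq0.
have -> : (m == 0%N) = false by apply/negbTE; rewrite -lt0n.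
rewrite andbF /= => /eqP hs.
have := psumr_eq0P (fun t _ => hu (tval t)) hs (i := in_tuple x) isT.
by move=> /= h; rewrite h eqxx in hx.
Qed.

Lemma lavg_step {R : realType} {m : nat} {beta lambda : R} {u : vertex m -> R} :
  (0 < m)%N -> 0 < beta -> beta < 1 -> 0 < lambda ->
  (forall x, - Delta beta u x = lambda * u x) -> (forall x, 0 <= u x) ->
  (exists x, u x != 0) -> forall k, lavg u k.+1 < lavg u k.
Proof.
move=> hm hb0 hb1 hl heq hu hx k.
have := lavg_decr hm hb0 hb1 (ltW hl) heq hu k.
have h0 := lavg0_pos hm hb0 hb1 (ltW hl) heq hu hx.
have hp : 0 < lambda * pbeta beta ^+ k * lavg u 0.
  by apply: mulr_gt0 => //; apply: mulr_gt0 => //; apply: exprn_gt0; apply: pbeta_gt0.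
lra.
Qed.

Lemma lavg_lt {R : realType} {m : nat} {beta lambda : R} {u : vertex m -> R} :
  (0 < m)%N -> 0 < beta -> beta < 1 -> 0 < lambda ->
  (forall x, - Delta beta u x = lambda * u x) -> (forall x, 0 <= u x) ->
  (exists x, u x != 0) -> forall i j, (i < j)%N -> lavg u j < lavg u i.
Proof.
move=> hm hb0 hb1 hl heq hu hx i; elim=> [//|j IH].
rewrite ltnS leq_eqVlt => /orP [/eqP ->|hij].
  exact: (lavg_step hm hb0 hb1 hl heq hu hx).
exact: lt_trans (lavg_step hm hb0 hb1 hl heq hu hx j) (IH hij).
Qed.

Lemma big_child {R : realType} {m : nat} (u : vertex m -> R) (y : vertex m) :
  (0 < m)%N -> exists i : 'I_m, (m%:R)^-1 * \sum_(j < m) u (j :: y) <= u (i :: y).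
Proof.
move=> hm.
case: (pselect (exists i : 'I_m, (m%:R)^-1 * \sum_(j < m) u (j :: y) <= u (i :: y))) => // hn.
exfalso.
set A := (m%:R)^-1 * _ in hn.
have hlt : forall i : 'I_m, true -> u (i :: y) < A.
  move=> i _; rewrite ltNge; apply/negP => h; apply: hn; by exists i.
have hh : has (fun _ => true) (index_enum 'I_m).
  by apply/hasP; exists (Ordinal hm) => //; rewrite mem_index_enum.
have := ltr_sum hh hlt.
rewrite sumr_const card_ord /A -[_ *+ m]mulr_natl mulrA mulfV ?mul1r ?ltxx //.
by rewrite pnatr_eq0 -lt0n.
Qed.

Lemma phi_step {R : realType} {m : nat} {beta lambda : R} {u : vertex m -> R} (M : R) :
  (0 < m)%N -> 0 < beta -> beta < 1 -> 0 <= lambda ->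
  (forall x, - Delta beta u x = lambda * u x) -> (forall x, u x <= M) ->
  forall (y : vertex m) (i : 'I_m), (0 < size y)%N ->
  (m%:R)^-1 * \sum_(j < m) u (j :: y) <= u (i :: y) ->
  u y - pbeta beta * u (behead y) - lambda * M / (1 - beta) * pbeta beta ^+ size y
  <= u (i :: y) - pbeta beta * u y.
Proof.
move=> hm hb0 hb1 hl heq hM y i hy hi.
have hm0 : (m%:R : R) != 0 by rewrite pnatr_eq0 -lt0n.
have he := eq_nonroot hb0 hb1 heq y hy.
have hD : 0 < 1 - beta by rewrite subr_gt0.
have hD0 : 1 - beta != 0 by rewrite gt_eqF.
have hp := pbeta_gt0 hb0 hb1.
set A := (m%:R)^-1 * _ in hi.
set P := pbeta beta ^+ size y in he *.
have hP : 0 <= P by rewrite exprn_ge0 // ltW.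
have eA : A = ((1 - lambda * P) * u y - beta * u (behead y)) / (1 - beta).
  by rewrite -he /A; field; apply/andP; split.
have key : A - pbeta beta * u y - (u y - pbeta beta * u (behead y) - lambda * M / (1 - beta) * P)
   = lambda * P * (M - u y) / (1 - beta).
  by rewrite eA /pbeta; field.
have hk : 0 <= lambda * P * (M - u y) / (1 - beta).
  by apply: divr_ge0; [apply: mulr_ge0; [apply: mulr_ge0|rewrite subr_ge0]|apply: ltW].
lra.
Qed.

Lemma phi_bound {R : realType} {m : nat} {beta lambda : R} {u : vertex m -> R} (M : R) :
  (0 < m)%N -> 0 < beta -> beta < 1 / 2 -> 0 <= lambda ->
  (forall x, - Delta beta u x = lambda * u x) -> (forall x, 0 <= u x) ->
  (forall x, u x <= M) ->
  (forall b, is_branch b -> u (b n) @[n --> \oo] --> (0 : R)) ->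
  forall y0 : vertex m, (0 < size y0)%N ->
  u y0 - pbeta beta * u (behead y0) <=
  lambda * M / (1 - beta) / (1 - pbeta beta) * pbeta beta ^+ size y0.
Proof.
move=> hm hb0 hb12 hl heq hu hM hbr y0 hy0.
have hb1 : beta < 1 by lra.
have hp := pbeta_gt0 hb0 hb1.
have hp1 : pbeta beta < 1.
  rewrite /pbeta ltr_pdivrMr ?subr_gt0 //; lra.
have hD : 0 < 1 - beta by rewrite subr_gt0.
have h1p : 0 < 1 - pbeta beta by rewrite subr_gt0.
have hM0 : 0 <= M by apply: le_trans (hu [::]) (hM [::]).
have [f hf] := choice (fun y => big_child u y hm).
set step := fun y : vertex m => f y :: y.
set g := fun j => iter j step y0.
set p := pbeta beta in hp hp1 h1p *.
set c := lambda * M / (1 - beta).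
have hc : 0 <= c by apply: divr_ge0; [apply: mulr_ge0|apply: ltW].
set Phi := fun y : vertex m => u y - p * u (behead y).
have hsz : forall j, size (g j) = (size y0 + j)%N.
  by elim=> [|j IH]; rewrite ?addn0 // /g iterS /= -/(g j) IH addnS.
have hg : forall j, Phi y0 - c * p ^+ size y0 * (1 - p ^+ j) / (1 - p) <= Phi (g j).
  elim=> [|j IH].
    by rewrite expr0 subrr mulr0 mul0r subr0.
  have hs := phi_step M hm hb0 hb1 hl heq hM (g j) (f (g j)) ltac:(by rewrite hsz addn_gt0 hy0) (hf (g j)).
  have -> : g j.+1 = f (g j) :: g j by [].
  rewrite /Phi /= -/p.
  move: hs; rewrite hsz exprD -/p -/c => hs.
  have e : c * p ^+ size y0 * (1 - p ^+ j.+1) / (1 - p) =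
    c * p ^+ size y0 * (1 - p ^+ j) / (1 - p) + c * (p ^+ size y0 * p ^+ j).
    rewrite exprS; field; rewrite subr_eq0 gt_eqF //.
  rewrite e; move: IH; rewrite /Phi; lra.
have [s hs0] : {s : nat | s = size y0} by exists (size y0).
pose b := fun n : nat => if (n <= s)%N then drop (s - n) y0 else iter (n - s) step y0.
have hbs : forall j, b (s + j)%N = g j.
  case=> [|j]; first by rewrite /b addn0 leqnn subnn drop0.
  rewrite /b ifF ?addKn //; apply/negbTE; by rewrite -ltnNge addnS ltnS leq_addr.
have hb : is_branch b.
  split; first by rewrite /b leq0n subn0 drop_oversize // hs0.
  move=> n; rewrite /b.
  case: (ltngtP n s) => hns.
  - exists (nth (Ordinal hm) y0 (s - n.+1)).
    rewrite (drop_nth (Ordinal hm)) ?subnSK // -hs0; lia.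
  - exists (f (iter (n - s) step y0)).
    by rewrite subSn ?(ltnW hns) // iterS.
  - rewrite hns subSnn subnn drop0 /=.
    by exists (f y0).
apply/ler_addgt0Pr => e he.
have := hbr b hb; move/cvgr0Pnorm_lt => /(_ e he) [N _ HN].
have hN := HN (s + N)%N (leq_addl _ _).
move: hN; rewrite /= hbs => hN.
have hgN := hg N.
have hub : Phi (g N) <= u (g N).
  rewrite /Phi; have := hu (behead (g N)); have := ltW hp; nra.
have hn : u (g N) <= `|u (g N)| by apply: ler_norm.
have hq : c * p ^+ s * (1 - p ^+ N) / (1 - p) <= c / (1 - p) * p ^+ s.
  have hK : 0 <= c * p ^+ s / (1 - p).
    by apply: divr_ge0; [apply: mulr_ge0 => //; apply: exprn_ge0; apply: ltW|apply: ltW].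
  have hpN : 0 <= p ^+ N by apply: exprn_ge0; apply: ltW.
  have -> : c * p ^+ s * (1 - p ^+ N) / (1 - p) = c * p ^+ s / (1 - p) * (1 - p ^+ N).
    by rewrite mulrAC.
  have -> : c / (1 - p) * p ^+ s = c * p ^+ s / (1 - p) * 1.
    by rewrite mulr1 mulrAC.
  rewrite ler_wpM2l //; lra.
rewrite /Phi in hgN hub; rewrite hs0 in hq; lra.
Qed.

Lemma expr_le_mono {R : realType} (p q : R) n : 0 <= p -> p <= q -> p ^+ n <= q ^+ n.
Proof.
move=> h0 h1; elim: n => [|n IH]; first by rewrite !expr0.
rewrite !exprS; apply: ler_pM => //; exact: exprn_ge0.
Qed.

Lemma lavg_cvg0 {R : realType} {m : nat} {beta lambda : R} {u : vertex m -> R} (M : R) :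
  (0 < m)%N -> 0 < beta -> beta < 1 / 2 -> 0 <= lambda ->
  (forall x, - Delta beta u x = lambda * u x) -> (forall x, 0 <= u x) ->
  (forall x, u x <= M) ->
  (forall b, is_branch b -> u (b n) @[n --> \oo] --> (0 : R)) ->
  lavg u n @[n --> \oo] --> (0 : R).
Proof.
move=> hm hb0 hb12 hl heq hu hM hbr.
have hb1 : beta < 1 by lra.
have hp := pbeta_gt0 hb0 hb1.
have hp1 : pbeta beta < 1.
  rewrite /pbeta ltr_pdivrMr ?subr_gt0 //; lra.
have hD : 0 < 1 - beta by rewrite subr_gt0.
have hM0 : 0 <= M by apply: le_trans (hu [::]) (hM [::]).
have hpb := phi_bound M hm hb0 hb12 hl heq hu hM hbr.
set p := pbeta beta in hp hp1 hpb.
set K := lambda * M / (1 - beta) / (1 - p) in hpb.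
have hK : 0 <= K.
  apply: divr_ge0; [apply: divr_ge0; [apply: mulr_ge0|apply: ltW]|]; rewrite ?subr_ge0 //; exact: ltW.
set q := (1 + p) / 2.
have hqp : p < q by rewrite /q; lra.
have hq1 : q < 1 by rewrite /q; lra.
have hq0 : 0 < q by rewrite /q; lra.
set B := M + K * p / (q - p).
have hKB : K * p <= (q - p) * B.
  have -> : (q - p) * B = (q - p) * M + K * p.
    rewrite /B; field; rewrite subr_eq0 gt_eqF //.
  have : 0 <= (q - p) * M by apply: mulr_ge0 => //; rewrite subr_ge0 ltW.
  lra.
have hug : forall y : vertex m, u y <= B * q ^+ size y.
  elim=> [|i y IH].
    rewrite expr0 mulr1 /B; apply: le_trans (hM _) _.
    rewrite lerDl; apply: divr_ge0; [apply: mulr_ge0 => //; apply: ltW|].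
    by []. by rewrite subr_ge0 ltW.
  have := hpb (i :: y) isT; rewrite /= !exprS.
  have hpq : p ^+ size y <= q ^+ size y by apply: expr_le_mono => //; apply: ltW.
  have hqn : 0 <= q ^+ size y by apply: exprn_ge0; apply: ltW.
  have h1 : K * (p * p ^+ size y) <= K * p * q ^+ size y.
    by rewrite mulrA ler_wpM2l // mulr_ge0 // ltW.
  have h2 : p * u y <= p * (B * q ^+ size y) by rewrite ler_wpM2l // ltW.
  have h3 : K * p * q ^+ size y <= (q - p) * B * q ^+ size y.
    by rewrite ler_wpM2r.
  move: h1 h2 h3; move: (q ^+ size y) (p ^+ size y) => Q P.
  lra.
apply: (@squeeze_cvgr _ _ _ _ (fun _ => 0) (fun n => B * q ^+ n)).
- near=> n; apply/andP; split.
    by apply: lavg_ge => // t.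
  by apply: lavg_le => // t; have := hug (tval t); rewrite size_tuple.
- exact: cvg_cst.
- rewrite -(mulr0 B); apply: (cvgMl_tmp (a := B) (g := fun n => q ^+ n)).
  by apply: cvg_expr; rewrite ger0_norm ?ltW.
Unshelve. all: by end_near.
Qed.

Lemma level_avgE {R : realType} {m : nat} (u : vertex m -> R) x :
  level_avg u x = lavg u (size x).
Proof. by []. Qed.

Lemma branch_size {m : nat} (b : nat -> vertex m) : is_branch b -> forall n, size (b n) = n.
Proof.
move=> [h0 hS]; elim=> [|n IH]; first by rewrite h0.
by have [i ->] := hS n; rewrite /= IH.
Qed.

Theorem lemma5p4 (R : realType) (m : nat) (beta lambda : R)
  (u : vertex m -> R) :
  (2 <= m)%N ->
  0 < beta -> beta < 1 / 2 ->
  0 < lambda -> lambda < 1 ->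
  is_principal_eigenvalue m beta lambda ->
  is_eigenfunction beta lambda u -> (forall x, 0 <= u x) ->
  [/\ is_eigenfunction beta lambda (level_avg u),
      forall x, 0 < level_avg u x,
      forall b, is_branch b -> level_avg u (b n) @[n --> \oo] --> (0 : R),
      forall x y : vertex m, size x = size y -> level_avg u x = level_avg u y
    & forall x y : vertex m, (size x < size y)%N -> level_avg u y < level_avg u x].
Proof.
move=> hm2 hb0 hb12 hl0 hl1 _ [[M hMb] hnz heq hbr] hu.
have hm : (0 < m)%N by apply: leq_trans hm2.
have hb1 : beta < 1 by lra.
have hM : forall x, u x <= M by move=> x; apply: le_trans (ler_norm _) (hMb x).
have hm0 : (m%:R : R) != 0 by rewrite pnatr_eq0 -lt0n.
have hpos : forall n, 0 < lavg u n.
  move=> n; apply: le_lt_trans (lavg_step hm hb0 hb1 hl0 heq hu hnz n).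
  by apply: lavg_ge => // t.
have hcv : forall b, is_branch b -> level_avg u (b n) @[n --> \oo] --> (0 : R).
  move=> b hb.
  have -> : (fun n => level_avg u (b n)) = lavg u.
    by apply: funext => n; rewrite level_avgE branch_size.
  exact: (lavg_cvg0 M hm hb0 hb12 (ltW hl0) heq hu hM hbr).
split => //.
- split => //.
  + exists M => x; rewrite level_avgE ger0_norm; last exact: ltW (hpos _).
    by apply: lavg_le => // t.
  + by exists [::]; rewrite level_avgE gt_eqF.
  + case=> [|j z].
      rewrite /Delta (eq_bigr (fun _ => lavg u 1)) // level_avgE /= sumr_const card_ord (lavg_root heq).
      by rewrite -[_ *+ m]mulr_natl; field.
    rewrite /Delta (eq_bigr (fun _ => lavg u (size z).+2)) // !level_avgE /= sumr_const card_ord.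
    have hr := lavg_rec hm hb0 hb1 heq (size z).
    have hP : pbeta beta ^+ (size z).+1 != 0.
      by rewrite expf_neq0 // gt_eqF // pbeta_gt0.
    move: hr; move: (pbeta beta ^+ (size z).+1) hP => P hP hr.
    rewrite -[_ *+ m]mulr_natl.
    have hD0 : 1 - beta != 0 by rewrite subr_eq0 gt_eqF.
    have ea2 : lavg u (size z).+2 =
      ((1 - lambda * P) * lavg u (size z).+1 - beta * lavg u (size z)) / (1 - beta).
      by rewrite -hr; field.
    by rewrite ea2; field; rewrite ?hm0 ?hP ?hD0.
- by move=> x; rewrite level_avgE.
- by move=> x y e; rewrite !level_avgE e.
- move=> x y hxy; rewrite !level_avgE.
  exact: (lavg_lt hm hb0 hb1 hl0 heq hu hnz).
Qed.
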